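(* Let $\gamma=(\gamma_1,\dots,\gamma_b)$ be a parallel map on $V=V_1\oplus\cdots\oplus V_b$, $V_i\cong(\mathbb F_2)^m$, with $0\gamma=0$. Let $U,U'$ be subspaces of $V$ of dimension $n-1$ with $J_U\cap J_{U'}=\emptyset$. Suppose that for every $i\notin J_U\cup J_{U'}$, $\gamma_i$ is differentially $2^r$-uniform with $r<m$ and strongly $(r-1)$-anti-invariant, and for every $j\in J_U\cup J_{U'}$, $\gamma_j$ is differentially $2^r$-uniform with $r<m-1$ and strongly $r$-anti-invariant. If $\gamma$ maps $\mathcal{LA}_U(W_1|W_2)$ onto a non-trivial partition $\mathcal{LA}_{U'}(W_1'|W_2')$, then $W_1,W_1',W_2,W_2'$ are walls and $W_1=W_1'=W_2=W_2'$; in particular both partitions are linear.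
   Context: Let $m,b>1$, $n=mb$, $V=(\mathbb F_2)^n=V_1\oplus\cdots\oplus V_b$, $V_i\cong(\mathbb F_2)^m$. Permutations act on the right. A parallel map is $\gamma\in\mathrm{Sym}(V)$ with $(v_1\oplus\cdots\oplus v_b)\gamma=v_1\gamma_1\oplus\cdots\oplus v_b\gamma_b$, $\gamma_i\in\mathrm{Sym}(V_i)$. A wall is $\bigoplus_{i\in I}V_i$ with $\emptyset\ne I\subsetneq\{1,\dots,b\}$. $J_U=\{j:V_j\cap U\subsetneq V_j\}$. $f:(\mathbb F_2)^m\to(\mathbb F_2)^m$ is differentially $\delta$-uniform if $\delta=\max_{a\ne0,b}|\{x:f(x+a)+f(x)=b\}|$; for $f(0)=0$, $f$ is strongly $s$-anti-invariant if for all subspaces $A,B$ with $f(A)=B$, either $\dim A=\dim B<m-s$ or $A=B=(\mathbb F_2)^m$. A permutation maps $\mathcal A$ onto $\mathcal B$ if it sends the blocks of $\mathcal A$ exactly onto those of $\mathcal B$; trivial partitions are the singleton partition and $\{V\}$. $\mathcal L(W)=\{W+v:v\in V\}$. For subspaces $W_1,W_2\subseteq U$, $\mathcal{LA}_U(W_1|W_2)=\{W_1+v:v\in U\}\cup\{(W_2+\bar v)+v:v\in U\}$ for any $\bar v\in V\setminus U$. *)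

(* Defs.v *)
From HB Require Import structures.
From mathcomp Require Import all_boot all_order all_algebra all_fingroup.
Set Implicit Arguments. Unset Strict Implicit. Unset Printing Implicit Defensive.
Import GRing.Theory.
Local Open Scope ring_scope.

(* Block space V_i ~ (F_2)^m and the full space V = V_1 (+) ... (+) V_b,
   modelled as functions from block indices to block vectors. *)
Definition Blk (m : nat) := 'rV['F_2]_m.
Definition Sp (m b : nat) := {ffun 'I_b -> Blk m}.

Definition sset m b (U : {vspace Sp m b}) : {set Sp m b} := [set x | x \in U].

Definition block m b (j : 'I_b) : {set Sp m b} :=
  [set x : Sp m b | [forall k, (k != j) ==> (x k == 0)]].

Definition JU m b (U : {vspace Sp m b}) : {set 'I_b} :=
  [set j | (block m j :&: sset U) \proper block m j].

Definition is_wall m b (W : {vspace Sp m b}) : Prop :=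
  exists I : {set 'I_b}, [/\ I != set0, I != setT &
    sset W = [set x : Sp m b | [forall k, (k \notin I) ==> (x k == 0)]]].

Definition parallel m b (g : {perm Sp m b}) (gi : 'I_b -> {perm Blk m}) : Prop :=
  forall x : Sp m b, g x = [ffun i => gi i (x i)].

Definition diff_unif m (f : Blk m -> Blk m) : nat :=
  \max_(a : Blk m | a != 0) \max_(c : Blk m)
     #|[set x : Blk m | (f (x + a) + f x)%R == c]|.

Definition strongly_anti_inv m (s : nat) (f : Blk m -> Blk m) : Prop :=
  f 0 = 0 /\
  forall A B : {vspace Blk m},
    f @: [set x | x \in A] = [set x | x \in B] ->
    (\dim A = \dim B /\ (\dim A < m - s)%N) \/ (A = fullv /\ B = fullv).

Definition coset m b (W : {vspace Sp m b}) (v : Sp m b) : {set Sp m b} :=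
  [set (w + v)%R | w : Sp m b in sset W].

Definition Lpart m b (W : {vspace Sp m b}) : {set {set Sp m b}} :=
  [set coset W v | v : Sp m b].

(* LA_U(W1|W2), with the auxiliary vector vb (to be taken outside U) *)
Definition LApart m b (U W1 W2 : {vspace Sp m b}) (vb : Sp m b)
  : {set {set Sp m b}} :=
  [set coset W1 v | v in sset U] :|: [set coset W2 (vb + v) | v in sset U].

Definition maps_onto (T : finType) (g : T -> T) (A B : {set {set T}}) : Prop :=
  [set g @: X | X : {set T} in A] = B.

Definition nontrivial_part (T : finType) (B : {set {set T}}) : Prop :=
  B != [set [set x] | x : T] /\ B != [set [set: T]].

(* Main.v *)
Require Import Defs.
From HB Require Import structures.
From mathcomp Require Import all_boot all_order all_algebra all_fingroup all_field.
From mathcomp Require Import zify.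
Set Implicit Arguments. Unset Strict Implicit. Unset Printing Implicit Defensive.
Import GRing.Theory.
Local Open Scope ring_scope.

Lemma F2_cases (k : 'F_2) : k = 0 \/ k = 1.
Proof. by case: k => [[|[|]]] //= H; [left|right]; apply: val_inj. Qed.

Lemma addxx_gen (V : lmodType 'F_2) (x : V) : x + x = 0.
Proof. rewrite -mulr2n -scaler_nat. have ->: (2%:R : 'F_2) = 0 by apply: val_inj. by rewrite scale0r. Qed.

Lemma addKx (V : lmodType 'F_2) (x y : V) : x + (x + y) = y.
Proof. by rewrite addrA addxx_gen add0r. Qed.

Lemma addxK (V : lmodType 'F_2) (x y : V) : (y + x) + x = y.
Proof. by rewrite -addrA addxx_gen addr0. Qed.

Lemma dimSp m b : \dim {: Sp m b} = (m * b)%N.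
Proof. by rewrite dimvf /dim /= card_ord dim_matrix mul1r mulnC. Qed.

Lemma hyper2 m b (U : {vspace Sp m b}) (x y : Sp m b) : (0 < m * b)%N ->
  \dim U = (m * b).-1 -> x \notin U -> y \notin U -> x + y \in U.
Proof.
move=> hmb hU xU yU.
have full : (U + <[x]>)%VS = fullv.
  apply/eqP; rewrite eqEdim subvf /= dimSp.
  have := dimv_leqif_sup (addvSl U <[x]>).
  move=> [] le eq.
  have : (\dim U < \dim (U + <[x]>))%N.
    rewrite ltn_neqAle le andbT eq; apply/negP => sub.
    move/negP: xU; apply; apply: (subvP sub); by have := memv_add (mem0v U) (memv_line x); rewrite add0r.
  by rewrite hU prednK.
have : y \in (U + <[x]>)%VS by rewrite full memvf.
case/memv_addP => u uU [v /vlineP [k ->] yE]; rewrite yE in yU *.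
case: (F2_cases k) => kE; rewrite kE in yU *.
  by rewrite (scale0r x) addr0 uU in yU.
by rewrite (scale1r x) addrC -addrA [x + _]addrC addxx_gen addr0.
Qed.

Definition ins m b (i : 'I_b) (s : Blk m) : Sp m b := [ffun j => if j == i then s else 0].

Fact ins_is_semilinear m b (i : 'I_b) : semilinear (@ins m b i).
Proof.
split=> [a s|s t]; apply/ffunP => j; rewrite !ffunE; case: (j == i) => //.
  by rewrite scaler0.
by rewrite addr0.
Qed.
HB.instance Definition _ m b (i : 'I_b) :=
  GRing.isSemilinear.Build 'F_2 (Blk m) (Sp m b) _ (@ins m b i) (@ins_is_semilinear m b i).

Definition pre m b (i : 'I_b) (W : {vspace Sp m b}) : {vspace Blk m} :=
  (linfun (@ins m b i) @^-1: W)%VS.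

Lemma mem_pre m b (i : 'I_b) (W : {vspace Sp m b}) s : (s \in pre i W) = (ins i s \in W).
Proof. by rewrite -memv_preim lfunE. Qed.

Lemma insE m b (i j : 'I_b) (s : Blk m) : ins i s j = if j == i then s else 0.
Proof. by rewrite ffunE. Qed.

Lemma insD m b (i : 'I_b) (s t : Blk m) : ins i (s + t) = ins i s + ins i t.
Proof. exact: raddfD. Qed.

Lemma ins0 m b (i : 'I_b) : ins i (0 : Blk m) = 0.
Proof. exact: raddf0. Qed.

Lemma ins_inj m b (i : 'I_b) : injective (@ins m b i).
Proof. by move=> s t /ffunP /(_ i); rewrite !insE eqxx. Qed.

Lemma decomp m b (x : Sp m b) : x = \sum_k ins k (x k).
Proof.
apply/ffunP => j; rewrite sum_ffunE (bigD1 j) //= big1 ?addr0 ?insE ?eqxx //.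
by move=> k kj; rewrite insE eq_sym (negbTE kj).
Qed.

Lemma notJ m b (U : {vspace Sp m b}) i s : i \notin JU U -> ins i s \in U.
Proof.
rewrite inE properEneq subsetIl andbT negbK => /eqP E.
have : ins i s \in block m i :&: sset U.
  rewrite E inE; apply/forallP => k; apply/implyP => ki.
  by rewrite insE (negbTE ki).
by rewrite !inE => /andP[].
Qed.

Lemma inJ m b (U : {vspace Sp m b}) i : i \in JU U -> exists t, ins i t \notin U.
Proof.
rewrite inE => /properP [_ [x xb xn]].
exists (x i).
have -> : ins i (x i) = x.
  apply/ffunP => k; rewrite insE; case: eqP => [->//|/eqP ki].
  by move: xb; rewrite inE => /forallP /(_ k); rewrite ki => /eqP.
apply: contraNN xn => xU. by rewrite in_setI xb inE xU.
Qed.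

Lemma JU_nonempty m b (U : {vspace Sp m b}) vb : vb \notin U -> exists i, i \in JU U.
Proof.
move=> vbU; case: (pickP (mem (JU U))) => [i Hi|H]; first by exists i.
move/negP: vbU; case; rewrite (decomp vb); apply: rpred_sum => k _; apply: notJ.
by rewrite -[k \in _]/(mem (JU U) k) H.
Qed.

Lemma card_Blk m : #|{: Blk m}| = (2 ^ m)%N.
Proof. by rewrite card_mx card_Fp // mul1n. Qed.

Lemma card_vs m (Y : {vspace Blk m}) : #|[set x | x \in Y]| = (2 ^ \dim Y)%N.
Proof. by rewrite cardsE card_vspace card_Fp. Qed.

Lemma half_card m b (U : {vspace Sp m b}) i : (0 < m * b)%N -> \dim U = (m * b).-1 ->
  i \in JU U -> (2 ^ m <= 2 * #|[set s | ins i s \in U]|)%N.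
Proof.
move=> hmb hU /inJ [t tU].
set S := [set s | ins i s \in U].
have : (#|~: S| <= #|S|)%N.
  rewrite -(card_imset _ (addIr t)).
  apply: subset_leq_card; apply/subsetP => y /imsetP [s].
  rewrite !inE => sU ->; rewrite insD; exact: hyper2.
by rewrite -card_Blk -(cardsC S) mul2n -addnn leq_add2l.
Qed.

Lemma mem_coset m b (W : {vspace Sp m b}) x y : (y \in Defs.coset W x) = (y + x \in W).
Proof.
apply/imsetP/idP => [[w] | yx].
  by rewrite inE => wW ->; rewrite addxK.
by exists (y + x); rewrite ?inE ?addxK.
Qed.

Lemma LA_diff m b (U W1 W2 : {vspace Sp m b}) vb Z p q :
  vb \notin U -> (W1 <= U)%VS -> (W2 <= U)%VS -> Z \in LApart U W1 W2 vb ->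
  p \in Z -> q \in Z ->
  (p \in U -> p + q \in W1) /\ (p \notin U -> p + q \in W2).
Proof.
move=> vbU s1 s2; rewrite inE => /orP [] /imsetP [v]; rewrite inE => vU -> .
  rewrite !mem_coset => pW qW.
  have E : p + q = (p + v) + (q + v) by rewrite addrACA addxx_gen addr0.
  have pU : p \in U by rewrite -[p](addxK v); apply: rpredD => //; apply: (subvP s1).
  by split => [_|]; [rewrite E; apply: rpredD | rewrite pU].
rewrite !mem_coset => pW qW.
have E : p + q = (p + (vb + v)) + (q + (vb + v)) by rewrite addrACA addxx_gen addr0.
split => [pU|_]; last by rewrite E; apply: rpredD.
move/negP: vbU; case; rewrite -[vb](addxK v) -[vb + v](addKx p).
apply: rpredD => //; apply: rpredD => //; exact: (subvP s2).
Qed.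

Lemma LA_cover m b (U W1 W2 : {vspace Sp m b}) vb x :
  (0 < m * b)%N -> \dim U = (m * b).-1 -> vb \notin U ->
  (x \in U -> Defs.coset W1 x \in LApart U W1 W2 vb) /\
  (x \notin U -> Defs.coset W2 x \in LApart U W1 W2 vb).
Proof.
move=> hmb hU vbU; split => xU; rewrite inE; apply/orP.
  by left; apply/imsetP; exists x; rewrite ?inE.
right; apply/imsetP; exists (vb + x); first by rewrite inE; exact: hyper2.
by rewrite addKx.
Qed.

Lemma LA_Lpart m b (U W : {vspace Sp m b}) vb :
  (0 < m * b)%N -> \dim U = (m * b).-1 -> vb \notin U ->
  LApart U W W vb = Lpart W.
Proof.
move=> hmb hU vbU; apply/setP => Z; apply/idP/idP.
  by rewrite inE => /orP [] /imsetP [v _ ->]; apply/imsetP; eexists.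
case/imsetP => v _ ->; have [] := LA_cover W W v hmb hU vbU.
by case: (boolP (v \in U)) => vU h1 h2; [apply: h1 | apply: h2].
Qed.

Lemma coset_zero m b (W : {vspace Sp m b}) v :
  (forall z, z \in W -> z = 0) -> Defs.coset W v = [set v].
Proof.
move=> H; apply/setP => y; rewrite mem_coset inE; apply/idP/eqP => [/H yv|->].
  by rewrite -[y](addxK v) yv add0r.
by rewrite addxx_gen mem0v.
Qed.

Lemma addr_eq0F2 (V : lmodType 'F_2) (x y : V) : (x + y == 0) = (x == y).
Proof.
apply/eqP/eqP => [E|->]; last exact: addxx_gen.
by rewrite -[x](addxK y) E add0r.
Qed.
Lemma du_bound m (f : Blk m -> Blk m) (a c : Blk m) : a != 0 ->
  (#|[set x : Blk m | (f (x + a) + f x)%R == c]| <= diff_unif f)%N.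
Proof.
move=> a0; rewrite /diff_unif.
apply: leq_trans (leq_bigmax_cond a a0).
by rewrite (bigD1 c) //= leq_maxl.
Qed.

Lemma count_D m (f : Blk m -> Blk m) (a : Blk m) (S C : {set Blk m}) :
  a != 0 -> (forall s, s \in S -> f (s + a) + f s \in C) ->
  (#|S| <= #|C| * diff_unif f)%N.
Proof.
move=> a0 hS.
rewrite -sum1_card (partition_big (fun s => f (s + a) + f s) (mem C)) //=.
rewrite -sum_nat_const; apply: leq_sum => c _.
apply: leq_trans (du_bound f c a0).
rewrite sum1dep_card; apply: subset_leq_card; apply/subsetP => x.
by rewrite !inE => /andP[].
Qed.

Lemma arith0 m r : (r < m - 1)%N -> (r.+1 < m)%N. Proof. lia. Qed.
Lemma arith1 m r k : (r < m - 1)%N -> (m < (k + r).+1)%N -> (k < m - r)%N -> False.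
Proof. lia. Qed.
Lemma arith2 m r k : (r < m)%N -> (m < k + r)%N -> (k < m - (r - 1))%N -> False.
Proof. lia. Qed.
Theorem corollary3p13 (m b : nat) (hm : (1 < m)%N) (hb : (1 < b)%N)
  (g : {perm Sp m b}) (gi : 'I_b -> {perm Blk m})
  (hpar : parallel g gi) (h0 : g 0 = 0)
  (U U' W1 W2 W1' W2' : {vspace Sp m b})
  (hU : \dim U = (m * b).-1) (hU' : \dim U' = (m * b).-1)
  (hJ : JU U :&: JU U' = set0)
  (hout : forall i : 'I_b, i \notin JU U :|: JU U' ->
     exists r : nat, [/\ (r < m)%N, diff_unif (gi i) = (2 ^ r)%N &
                         strongly_anti_inv (r - 1) (gi i)])
  (hin : forall j : 'I_b, j \in JU U :|: JU U' ->
     exists r : nat, [/\ (r < m - 1)%N, diff_unif (gi j) = (2 ^ r)%N &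
                         strongly_anti_inv r (gi j)])
  (hW1 : (W1 <= U)%VS) (hW2 : (W2 <= U)%VS)
  (hW1' : (W1' <= U')%VS) (hW2' : (W2' <= U')%VS)
  (vb vb' : Sp m b) (hvb : vb \notin U) (hvb' : vb' \notin U')
  (hmap : maps_onto g (LApart U W1 W2 vb) (LApart U' W1' W2' vb'))
  (hnt : nontrivial_part (LApart U' W1' W2' vb')) :
  [/\ is_wall W1, is_wall W1', is_wall W2 & is_wall W2'] /\
  [/\ W1 = W1', W1' = W2 & W2 = W2'] /\
  (LApart U W1 W2 vb = Lpart W1 /\ LApart U' W1' W2' vb' = Lpart W1').
Proof.
have hmb : (0 < m * b)%N by rewrite muln_gt0; apply/andP; split; apply: ltnW.
have gE : forall x i, g x i = gi i (x i) by move=> x i; rewrite hpar ffunE.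
have F0 : forall i, gi i 0 = 0.
  by move=> i; have := gE 0 i; rewrite h0 !ffunE.
have gins : forall i s, g (ins i s) = ins i (gi i s).
  move=> i s; apply/ffunP => j; rewrite gE !insE; case: eqP => [->|_] //; exact: F0.
have disj : forall i, i \in JU U -> i \notin JU U'.
  move=> i iU; apply/negP => iU'.
  have : i \in JU U :&: JU U' by rewrite inE iU iU'.
  by rewrite hJ inE.
have disj' : forall i, i \in JU U' -> i \notin JU U.
  by move=> i iU'; apply: contraL iU' => iU; apply: disj.
move: hmap; rewrite /maps_onto => hmap.
set A := LApart U W1 W2 vb.
set B := LApart U' W1' W2' vb'.
move: hmap; rewrite -/A -/B => hmap.
have imA : forall X, X \in A -> g @: X \in B.
  by move=> X XA; rewrite -hmap; apply/imsetP; exists X.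
have preB : forall Z, Z \in B -> exists2 X, X \in A & Z = g @: X.
  by move=> Z; rewrite -hmap => /imsetP.
have D1 : forall X x y, X \in A -> x \in X -> y \in X ->
    (g x \in U' -> g x + g y \in W1') /\ (g x \notin U' -> g x + g y \in W2').
  move=> X x y XA xX yX.
  exact: (LA_diff hvb' hW1' hW2' (imA X XA) (imset_f g xX) (imset_f g yX)).
have DA : forall X x y, X \in A -> x \in X -> y \in X ->
    (x \in U -> x + y \in W1) /\ (x \notin U -> x + y \in W2).
  move=> X x y XA xX yX; exact: (LA_diff hvb hW1 hW2 XA xX yX).
have cosA : forall x, x \in U -> Defs.coset W1 x \in A.
  by move=> x xU; have [] := LA_cover W1 W2 x hmb hU hvb; move=> h _; apply: h.
have cosA2 : forall x, x \notin U -> Defs.coset W2 x \in A.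
  by move=> x xU; have [] := LA_cover W1 W2 x hmb hU hvb; move=> _ h; apply: h.
have cosB : forall x, x \in U' -> Defs.coset W1' x \in B.
  by move=> x xU; have [] := LA_cover W1' W2' x hmb hU' hvb'; move=> h _; apply: h.
have cosB2 : forall x, x \notin U' -> Defs.coset W2' x \in B.
  by move=> x xU; have [] := LA_cover W1' W2' x hmb hU' hvb'; move=> _ h; apply: h.
have selfc : forall (W : {vspace Sp m b}) x, x \in Defs.coset W x.
  by move=> W x; rewrite mem_coset addxx_gen mem0v.
have addc : forall (W : {vspace Sp m b}) x w, w \in W -> w + x \in Defs.coset W x.
  by move=> W x w wW; rewrite mem_coset addxK.
have G1 : forall w, w \in W1 -> g w \in W1'.
  move=> w wW; have := (D1 _ 0 w (cosA 0 (mem0v U)) (selfc W1 0)).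
  rewrite -[w in w \in Defs.coset _ _](addr0 w) => /(_ (addc _ _ _ wW)) [+ _].
  by rewrite h0 add0r; apply; exact: mem0v.
have G2 : forall z, z \in W1' -> exists2 w, w \in W1 & g w = z.
  move=> z zW; have [X XA XE] := preB _ (cosB 0 (mem0v U')).
  have : z \in g @: X by rewrite -XE -[z]addr0; exact: addc.
  case/imsetP => x xX ->; exists x => //.
  have : 0 \in g @: X by rewrite -XE; exact: selfc.
  case/imsetP => y yX /esym; rewrite -h0 => /perm_inj y0; rewrite y0 in yX.
  by have [+ _] := DA X 0 x XA yX xX; rewrite add0r; apply; exact: mem0v.
have [u uU guU] : exists2 u, u \in U & g u \notin U'.
  have [j jJ] := JU_nonempty hvb'; have [t tU] := inJ jJ.
  exists (ins j ((gi j)^-1%g t)); first exact: notJ (disj' j jJ).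
  by rewrite gins permKV.
have [x0 x0U gx0U] : exists2 x, x \notin U & g x \in U'.
  have [j jJ] := JU_nonempty hvb; have [t tU] := inJ jJ.
  by exists (ins j t) => //; rewrite gins; exact: notJ (disj j jJ).
have imXY : forall i, gi i @: [set x | x \in pre i W1] = [set x | x \in pre i W1'].
  move=> i; apply/setP => y; apply/imsetP/idP => [[x] | ].
    by rewrite !inE !mem_pre => xW ->; rewrite -gins; exact: G1.
  rewrite inE mem_pre => /G2 [w wW gw]; exists ((gi i)^-1%g y); last by rewrite permKV.
  rewrite inE mem_pre; suff -> : ins i ((gi i)^-1%g y) = w by [].
  by apply: (@perm_inj _ g); rewrite gw gins permKV.
have core : forall i (S : {set Blk m}) w r,
    (forall s, s \in S -> ins i s \in U /\ g (ins i s) \in U') ->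
    w \in W1 -> w i != 0 -> diff_unif (gi i) = (2 ^ r)%N -> (2 ^ r < #|S|)%N ->
    (#|S| < 2 ^ (\dim (pre i W1') + r))%N.
  move=> i S w r hS wW wi0 du big.
  have c1 : forall w' a', w' \in W1 -> w' i = a' -> forall s, s \in S ->
      gi i (s + a') + gi i s + gi i a' \in pre i W1'.
    move=> w' a' w'W wa s sS; rewrite mem_pre.
    have [sU gsU] := hS s sS.
    have -> : ins i (gi i (s + a') + gi i s + gi i a') =
              (g (ins i s) + g (w' + ins i s)) + g w'.
      apply/ffunP => j; rewrite !ffunE !gE !ffunE.
      case: (j =P i) => [->|_]; last by rewrite F0 addr0 add0r addxx_gen.
      by rewrite wa [a' + s]addrC [gi i (s + a') + _]addrC.
    apply: rpredD; last exact: G1.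
    have := D1 _ (ins i s) (w' + ins i s) (cosA _ sU) (selfc _ _) (addc _ _ _ w'W).
    by case => + _; apply.
  have [y yY y0] : exists2 y, y \in pre i W1' & y != 0.
    case: (pickP [pred y | (y \in pre i W1') && (y != 0)]) => [y /andP [] | H].
      by exists y.
    exfalso; move: big; apply/negP; rewrite -leqNgt.
    have := @count_D m (gi i) (w i) S [set gi i (w i)] wi0.
    rewrite cards1 mul1n du; apply => s sS; rewrite inE.
    have := c1 w (w i) wW erefl s sS; have := H (gi i (s + w i) + gi i s + gi i (w i)).
    move=> Hf Hc; move: Hf; rewrite /= Hc /= => /negbFE; by rewrite addr_eq0F2.
  set a' := (gi i)^-1%g y.
  have a'W : ins i a' \in W1.
    have := yY; rewrite mem_pre => /G2 [w'' w''W gw''].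
    suff -> : ins i a' = w'' by [].
    by apply: (@perm_inj _ g); rewrite gw'' gins /a' permKV.
  have a'0 : a' != 0.
    by apply: contraNneq y0 => a'E; rewrite -(permKV (gi i) y) -/a' a'E F0.
  have gya : gi i a' = y by rewrite /a' permKV.
  have hC : forall s, s \in S ->
      gi i (s + a') + gi i s \in [set c | (c \in pre i W1') && (c != 0)].
    move=> s sS; rewrite inE; apply/andP; split.
      have ea : ins i a' i = a' by rewrite insE eqxx.
      have := c1 _ a' a'W ea s sS.
      by rewrite gya => h; rewrite -[_ + _](addxK y); apply: rpredD.
    rewrite addr_eq0F2; apply/negP => /eqP /perm_inj /eqP.
    by rewrite -addr_eq0F2 addrC addKx (negbTE a'0).
  apply: leq_ltn_trans (@count_D m (gi i) a' S _ a'0 hC) _.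
  have -> : [set c | (c \in pre i W1') && (c != 0)] = [set x | x \in pre i W1'] :\ 0.
    by apply/setP => c; rewrite !inE andbC.
  have := cardsD1 0 [set x | x \in pre i W1']; rewrite card_vs inE mem0v /= add1n => E.
  rewrite du expnD ltn_pmul2r ?expn_gt0 //.
  by rewrite E ltnS leqnn.
have supp : forall i w, w \in W1 -> w i != 0 ->
    (i \notin JU U) /\ (forall t, ins i t \in W1).
  move=> i w wW wi0.
  case: (boolP (i \in JU U)) => iJ.
    exfalso.
    have := hin i; rewrite inE iJ => /(_ isT) [r [rm du sa]].
    pose S := [set s | ins i s \in U].
    have hS : forall s, s \in S -> ins i s \in U /\ g (ins i s) \in U'.
      by move=> s; rewrite inE => sU; split => //; rewrite gins; apply: notJ (disj i iJ).
    have hh := @half_card m b U i hmb hU iJ; rewrite -/S in hh.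
    have big : (2 ^ r < #|S|)%N.
      have : (2 ^ r.+1 < 2 ^ m)%N by rewrite ltn_exp2l //; exact: arith0.
      by rewrite expnS => h; have := leq_trans h hh; rewrite ltn_pmul2l.
    have c := core i S w r hS wW wi0 du big.
    have : (2 ^ m < 2 ^ (\dim (pre i W1') + r).+1)%N.
      by rewrite expnS; apply: leq_ltn_trans hh _; rewrite ltn_pmul2l.
    rewrite ltn_exp2l // => hk.
    case: (proj2 sa _ _ (imXY i)) => [[dE lt] | [Xf _]].
      by rewrite dE in lt; exact: (arith1 rm hk lt).
    have [t tU] := inJ iJ; move/negP: tU; apply; apply: (subvP hW1).
    by rewrite -mem_pre Xf memvf.
  split => //.
  case: (boolP (i \in JU U')) => iJ'.
    exfalso.
    have := hin i; rewrite inE iJ' orbT => /(_ isT) [r [rm du sa]].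
    pose T := [set t | ins i t \in U'].
    pose S := gi i @^-1: T.
    have hS : forall s, s \in S -> ins i s \in U /\ g (ins i s) \in U'.
      by move=> s; rewrite !inE => sU; split; [apply: notJ | rewrite gins].
    have hh := @half_card m b U' i hmb hU' iJ'; rewrite -/T in hh.
    have cS : #|S| = #|T| by rewrite card_preimset //; exact: perm_inj.
    rewrite -cS in hh.
    have big : (2 ^ r < #|S|)%N.
      have : (2 ^ r.+1 < 2 ^ m)%N by rewrite ltn_exp2l //; exact: arith0.
      by rewrite expnS => h; have := leq_trans h hh; rewrite ltn_pmul2l.
    have c := core i S w r hS wW wi0 du big.
    have : (2 ^ m < 2 ^ (\dim (pre i W1') + r).+1)%N.
      by rewrite expnS; apply: leq_ltn_trans hh _; rewrite ltn_pmul2l.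
    rewrite ltn_exp2l // => hk.
    case: (proj2 sa _ _ (imXY i)) => [[dE lt] | [_ Yf]].
      by rewrite dE in lt; exact: (arith1 rm hk lt).
    have [t tU] := inJ iJ'; move/negP: tU; apply; apply: (subvP hW1').
    by rewrite -mem_pre Yf memvf.
  have := hout i; rewrite inE (negbTE iJ) (negbTE iJ') => /(_ isT) [r [rm du sa]].
  pose S := [set: Blk m].
  have hS : forall s, s \in S -> ins i s \in U /\ g (ins i s) \in U'.
    by move=> s _; split; [apply: notJ | rewrite gins; apply: notJ].
  have cS : #|S| = (2 ^ m)%N by rewrite cardsT card_Blk.
  have big : (2 ^ r < #|S|)%N by rewrite cS ltn_exp2l.
  have := core i S w r hS wW wi0 du big; rewrite cS ltn_exp2l // => hk.
  case: (proj2 sa _ _ (imXY i)) => [[dE lt] | [Xf _]].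
    by rewrite dE in lt; case: (arith2 rm hk lt).
  by move=> t; rewrite -mem_pre Xf memvf.
pose I := [set i | [exists w : Sp m b, (w \in W1) && (w i != 0)]].
have memW1 : forall y, (y \in W1) = [forall k, (k \notin I) ==> (y k == 0)].
  move=> y; apply/idP/forallP => [yW k | H].
    apply/implyP => kI; apply: contraNT kI => yk; rewrite inE; apply/existsP.
    by exists y; rewrite yW.
  rewrite (decomp y); apply: rpred_sum => k _.
  case: (boolP (k \in I)) => kI.
    by move: kI; rewrite inE => /existsP [w /andP [wW wk]]; exact: (supp k w wW wk).2.
  by have := H k; rewrite kI /= => /eqP ->; rewrite ins0 mem0v.
have W1nz : exists2 w, w \in W1 & w != 0.
  case: (pickP [pred w | (w \in W1) && (w != 0)]) => [w /andP [] | H]; first by exists w.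
  have W10 : forall w, w \in W1 -> w = 0.
    by move=> w wW; apply/eqP; have := H w; rewrite /= wW /= => /negbFE.
  have W1'0 : forall z, z \in W1' -> z = 0.
    by move=> z /G2 [w /W10 -> <-].
  have W2'0 : forall z, z \in W2' -> z = 0.
    move=> z zW; have [X XA XE] := preB _ (cosB2 _ guU).
    have : g u \in g @: X by rewrite -XE; exact: selfc.
    rewrite mem_imset; last exact: perm_inj.
    move=> uX.
    have : z + g u \in g @: X by rewrite -XE; exact: addc.
    case/imsetP => x xX xE.
    have [+ _] := DA X u x XA uX xX; move/(_ uU)/W10 => ux.
    have xu : x = u by rewrite -[x](addKx u) ux addr0.
    by rewrite -[z](addxK (g u)) xE xu addxx_gen.
  exfalso; case: hnt => /eqP hn _; apply: hn.
  apply/setP => Z; apply/idP/imsetP.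
    rewrite inE => /orP [] /imsetP [v _ ->].
      by exists v => //; apply: (@coset_zero _ _ W1' v W1'0).
    by exists (vb' + v) => //; apply: (@coset_zero _ _ W2' _ W2'0).
  case=> x _ ->; case: (boolP (x \in U')) => xU.
    by rewrite -(@coset_zero _ _ W1' x W1'0); apply: cosB.
  by rewrite -(@coset_zero _ _ W2' x W2'0); apply: cosB2.
have wall1 : is_wall W1.
  exists I; split.
  - have [w wW w0] := W1nz.
    have [k wk] : exists k, w k != 0.
      case: (pickP [pred k | w k != 0]) => [k wk | H]; first by exists k.
      case/negP: w0; apply/eqP/ffunP => k; rewrite ffunE; apply/eqP.
      by have := H k; rewrite /= => /negbFE.
    by apply/set0Pn; exists k; rewrite inE; apply/existsP; exists w; rewrite wW.
  - have [j jJ] := JU_nonempty hvb.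
    apply/eqP => IT; have : j \in I by rewrite IT inE.
    rewrite inE => /existsP [w /andP [wW wj]].
    by have := (supp j w wW wj).1; rewrite jJ.
  - by apply/setP => y; rewrite !inE memW1.
have WL : forall x z, (g (z + x) + g x \in W1) = (z \in W1).
  move=> x z; rewrite !memW1; apply: eq_forallb => k.
  rewrite ffunE !gE ffunE addr_eq0F2; congr (_ ==> _).
  apply/eqP/eqP => [/perm_inj E | ->]; last by rewrite add0r.
  by rewrite -[z k](addxK (x k)) E addxx_gen.
have W1'E : W1' = W1.
  apply/vspaceP => z; apply/idP/idP.
    by case/G2 => w wW <-; have := WL 0 w; rewrite addr0 h0 addr0 wW.
  move=> zW; have wW : (g^-1)%g z \in W1 by rewrite -(WL 0) addr0 h0 addr0 permKV.
  by rewrite -(permKV g z); apply: G1.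
have W2'E : W2' = W1.
  apply/vspaceP => z; apply/idP/idP.
    move=> zW; have [X XA XE] := preB _ (cosB2 _ guU).
    have : g u \in g @: X by rewrite -XE; exact: selfc.
    rewrite mem_imset; last exact: perm_inj.
    move=> uX.
    have : z + g u \in g @: X by rewrite -XE; exact: addc.
    case/imsetP => x xX xE.
    have [+ _] := DA X u x XA uX xX; move/(_ uU).
    by rewrite -(WL u) [u + x]addrC addxK -xE addxK.
  move=> zW; pose w := (g^-1)%g (z + g u) + u.
  have gw : g (w + u) = z + g u by rewrite /w addxK permKV.
  have wW : w \in W1 by rewrite -(WL u) gw addxK.
  have := D1 _ u (w + u) (cosA _ uU) (selfc _ _) (addc _ _ _ wW).
  by case => _ /(_ guU); rewrite gw addrC addxK.
have W2E : W2 = W1.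
  apply/vspaceP => z; apply/idP/idP.
    move=> zW.
    have := D1 _ x0 (z + x0) (cosA2 _ x0U) (selfc _ _) (addc _ _ _ zW).
    by case => /(_ gx0U); rewrite W1'E addrC WL.
  move=> zW; have [X XA XE] := preB _ (cosB _ gx0U).
  have : g x0 \in g @: X by rewrite -XE; exact: selfc.
  rewrite mem_imset; last exact: perm_inj.
  move=> xX.
  have : g (z + x0) \in g @: X.
    by rewrite -XE mem_coset W1'E WL.
  rewrite mem_imset; last exact: perm_inj.
  move=> zxX.
  have [_ +] := DA X x0 (z + x0) XA xX zxX; move/(_ x0U).
  by rewrite addrC addxK.
rewrite /A /B W1'E W2E W2'E.
split; first by split.
split; first by split.
by split; apply: LA_Lpart.
Qed.
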